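(* There exist a finite-horizon two-player Markov game $\mathcal{G}=(S,A_1,A_2,P,R_1,H,G)$, an abstraction $\phi$, and two peer policies $\pi_2^{e}$ and $\pi_2^{e+1}$ (a peer policy update $\pi_2^e\to\pi_2^{e+1}$) such that some $u\in\mathrm{Core}_\phi(\mathcal{S}_e)$ satisfies $u\notin\mathrm{Core}_\phi(\mathcal{S}_{e+1})$. Moreover, such examples can be chosen so that, after removing the trivial terminal (goal) symbol from all abstract trajectories, $\mathrm{Core}_\phi(\mathcal{S}_e)\cap\mathrm{Core}_\phi(\mathcal{S}_{e+1})=\varnothing$.
   Context: A two-player finite-horizon Markov game $\mathcal{G}=(S,A_1,A_2,P,R_1,H,G)$ has state set $S$, action sets $A_1$ (focal agent) and $A_2$ (peer), joint transition kernel $P(s'\mid s,a_1,a_2)$, focal reward $R_1(s,a_1,a_2)$, horizon $H<\infty$, and goal set $G\subseteq S$ (episodes terminate on first visit to $G$). In episode $e$ the peer follows a Markov policy $\pi_2^e(\cdot\mid s)$, inducing the single-agent MDP $M_e=(S,A_1,P_e,R_e,H,G)$ with $P_e(s'\mid s,a_1)=\sum_{a_2\in A_2}P(s'\mid s,a_1,a_2)\pi_2^e(a_2\mid s)$ and $R_e(s,a_1)=\sum_{a_2}R_1(s,a_1,a_2)\pi_2^e(a_2\mid s)$. A trajectory is $\tau=(s_1,a_1,\dots,s_T,a_T)$ with $T\le H$, a word over $S\times A_1$; $\mathcal{S}_e$ is the set of successful trajectories of $M_e$, i.e. trajectories realizable in $M_e$ (each transition $s_t\to s_{t+1}$ has positive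 probability under $P_e(\cdot\mid s_t,a_t)$, from the game's initial state) that reach $G$ at some $t\le H$. For sequences $u,v$, $u\preccurlyeq v$ means $u$ is a (not necessarily contiguous) subsequence of $v$. An abstraction is a map $\phi:S\times A_1\to\Sigma$ applied letterwise. The episode-wise invariant core is $\mathrm{Core}_\phi(\mathcal{S}_e)=\max_{\preccurlyeq}\{u\in\Sigma^{\le H}:\ \forall\tau\in\mathcal{S}_e,\ u\preccurlyeq\phi(\tau)\}$, the set of $\preccurlyeq$-maximal common subsequences (of length at most $H$) of all $\phi(\tau)$, $\tau\in\mathcal{S}_e$. *)

(* Defs.v *)
From HB Require Import structures.
From mathcomp Require Import all_boot all_order all_algebra.
Set Implicit Arguments. Unset Strict Implicit. Unset Printing Implicit Defensive.
Import Order.TTheory GRing.Theory Num.Theory.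
Local Open Scope ring_scope.

Section Game.
Variables (R : realFieldType) (S A1 A2 : finType).

Definition is_kernel (P : S -> A1 -> A2 -> S -> R) : Prop :=
  (forall s a1 a2 s', 0 <= P s a1 a2 s') /\
  (forall s a1 a2, \sum_(s' : S) P s a1 a2 s' = 1).

Definition is_policy (pi2 : S -> A2 -> R) : Prop :=
  (forall s a2, 0 <= pi2 s a2) /\ (forall s, \sum_(a2 : A2) pi2 s a2 = 1).

Definition induced_P (P : S -> A1 -> A2 -> S -> R) (pi2 : S -> A2 -> R)
  (s : S) (a1 : A1) (s' : S) : R :=
  \sum_(a2 : A2) P s a1 a2 s' * pi2 s a2.

Definition induced_R (R1 : S -> A1 -> A2 -> R) (pi2 : S -> A2 -> R)
  (s : S) (a1 : A1) : R :=
  \sum_(a2 : A2) R1 s a1 a2 * pi2 s a2.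

(* tau = [:: (s_1,a_1); ...; (s_T,a_T)] is a successful trajectory of M_e:
   1 <= T <= H, s_1 = s0, every transition has positive probability under P_e,
   s_T \in G and s_t \notin G for t < T (episodes terminate on first visit). *)
Definition successful (P : S -> A1 -> A2 -> S -> R) (pi2 : S -> A2 -> R)
  (H : nat) (G : {set S}) (s0 : S) (tau : seq (S * A1)) : Prop :=
  match tau with
  | [::] => False
  | x :: r =>
    [/\ (size tau <= H)%N, x.1 = s0,
        path (fun p q : S * A1 => 0 < induced_P P pi2 p.1 p.2 q.1) x r,
        (last x r).1 \in G
      & all (fun p : S * A1 => p.1 \notin G) (belast x r)]
  end.
End Game.

Section Core.
Variable (Sig : eqType).

Definition common_subseq (W : seq Sig -> Prop) (u : seq Sig) : Prop :=
  forall w, W w -> subseq u w.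

Definition in_core (H : nat) (W : seq Sig -> Prop) (u : seq Sig) : Prop :=
  [/\ (size u <= H)%N, common_subseq W u &
      forall v, (size v <= H)%N -> common_subseq W v -> subseq u v -> v = u].
End Core.

Definition abstract_succ (R : realFieldType) (S A1 A2 : finType) (Sig : eqType)
  (P : S -> A1 -> A2 -> S -> R) (pi2 : S -> A2 -> R) (H : nat) (G : {set S})
  (s0 : S) (phi : S * A1 -> Sig) (w : seq Sig) : Prop :=
  exists tau, successful P pi2 H G s0 tau /\ w = map phi tau.

Definition abstract_succ_strip (R : realFieldType) (S A1 A2 : finType) (Sig : eqType)
  (P : S -> A1 -> A2 -> S -> R) (pi2 : S -> A2 -> R) (H : nat) (G : {set S})
  (s0 : S) (phi : S * A1 -> Sig) (g : Sig) (w : seq Sig) : Prop :=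
  exists tau, successful P pi2 H G s0 tau /\
              w = filter (fun c => c != g) (map phi tau).

(* Main.v *)
Require Import Defs.
From HB Require Import structures.
From mathcomp Require Import all_boot all_order all_algebra.
Import Order.TTheory GRing.Theory Num.Theory.
Local Open Scope ring_scope.

Definition o0 : 'I_4 := @Ordinal 4 0 isT.
Definition o1 : 'I_4 := @Ordinal 4 1 isT.
Definition o2 : 'I_4 := @Ordinal 4 2 isT.
Definition o3 : 'I_4 := @Ordinal 4 3 isT.

Definition tgt (s : 'I_4) (a2 : bool) : nat :=
  if (nat_of_ord s == 0)%N then (if a2 then 1 else 2)%N else 3%N.

Definition PP (R : realFieldType) (s : 'I_4) (a1 : unit) (a2 : bool) (s' : 'I_4) : R :=
  ((val s' == tgt s a2)%N)%:R.

Definition pol (R : realFieldType) (b : bool) (s : 'I_4) (a2 : bool) : R :=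
  (a2 == b)%:R.

Definition GG : {set 'I_4} := [set s : 'I_4 | nat_of_ord s == 3%N].

Definition mid (b : bool) : 'I_4 := if b then o1 else o2.

Lemma ind_pol (R : realFieldType) b s a s' :
  induced_P (@PP R) (pol R b) s a s' = PP R s a b s'.
Proof.
rewrite /induced_P big_bool /pol; case: b => /=; rewrite ?eqxx /=;
by rewrite ?mulr1 ?mulr0 ?addr0 ?add0r.
Qed.

Lemma sum_ind (R : realFieldType) k : (k < 4)%N ->
  \sum_(s' : 'I_4) ((val s' == k)%N%:R : R) = 1.
Proof.
move=> Hk; rewrite (bigD1 (Ordinal Hk)) //= eqxx big1 ?addr0 // => i Hi.
case: eqP => // E; exfalso; move/eqP: Hi; apply; exact: val_inj.
Qed.

Lemma tgt_lt s b : (tgt s b < 4)%N.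
Proof. by rewrite /tgt; case: (_ == _); case: b. Qed.

Lemma succ_char (R : realFieldType) b tau :
  successful (@PP R) (pol R b) 3 GG o0 tau ->
  map fst tau = [:: o0; mid b; o3].
Proof.
case: tau => [|x r] //=.
case: x => s1 [] /=.
case: r => [|y r] /=.
  case=> _ -> _; by rewrite inE.
case: y => s2 [] /=.
rewrite ind_pol /PP ltr0n lt0b.
case: r => [|z r] /=.
  case=> _ -> /andP[/eqP E _]; rewrite inE E /tgt /=; clear E; by case: b.
case: z => s3 [] /=.
rewrite ind_pol /PP ltr0n lt0b.
case: r => [|w r] /=; last by case.
case=> _ -> /and3P[/eqP E2 /eqP E3 _] _ _.
have -> : s2 = mid b by apply: ord_inj; rewrite E2 /tgt /=; clear; by case: b.
have -> : s3 = o3 by apply: ord_inj; rewrite E3 /tgt E2 /=; clear; by case: b.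
by [].
Qed.

Definition tau0 (b : bool) : seq ('I_4 * unit) := [:: (o0, tt); (mid b, tt); (o3, tt)].

Lemma succ_tau0 (R : realFieldType) b : successful (@PP R) (pol R b) 3 GG o0 (tau0 b).
Proof.
rewrite /successful /tau0 /= !ind_pol /PP /tgt /= !inE /=.
by case: b => /=; rewrite ?ltr01 ?eqxx.
Qed.

Lemma core_single (Sig : eqType) (H : nat) (W : seq Sig -> Prop) w :
  (forall v, W v <-> v = w) -> (size w <= H)%N ->
  forall u, in_core H W u <-> u = w.
Proof.
move=> HW Hs u; split.
  case=> _ Hc Hm; have sw : subseq u w by apply: Hc; apply/HW.
  symmetry; apply: Hm => //; first by move=> v /HW ->.
move=> ->; split => //; first by move=> v /HW ->.
move=> v _ Hc Hwv; apply: subseq_anti; rewrite Hwv andbT; apply: Hc; exact/HW.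
Qed.

Arguments core_single {Sig H W w}.

Lemma abs_char (R : realFieldType) b v :
  abstract_succ (@PP R) (pol R b) 3 GG o0 fst v <-> v = [:: o0; mid b; o3].
Proof.
split.
  by case=> tau [/succ_char <- ->].
move=> ->; exists (tau0 b); split; [exact: succ_tau0 | by []].
Qed.

Lemma strip_char (R : realFieldType) b v :
  abstract_succ_strip (@PP R) (pol R b) 3 GG o0 fst o3 v <-> v = [:: o0; mid b].
Proof.
have F : filter (fun c => c != o3) [:: o0; mid b; o3] = [:: o0; mid b].
  by case: b.
split.
  by case=> tau [/succ_char E ->]; rewrite E.
move=> ->; exists (tau0 b); split; [exact: succ_tau0 | by rewrite -F].
Qed.

Theorem proposition1 (R : realFieldType) :
  exists (S A1 A2 : finType) (P : S -> A1 -> A2 -> S -> R)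
         (R1 : S -> A1 -> A2 -> R) (H : nat) (G : {set S}) (s0 : S)
         (Sig : finType) (phi : S * A1 -> Sig)
         (pi_e pi_e1 : S -> A2 -> R),
    [/\ is_kernel P /\ is_policy pi_e /\ is_policy pi_e1,
        ((exists tau, successful P pi_e H G s0 tau) /\
         (exists tau, successful P pi_e1 H G s0 tau)),
        (exists u : seq Sig,
           in_core H (abstract_succ P pi_e H G s0 phi) u /\
           ~ in_core H (abstract_succ P pi_e1 H G s0 phi) u)
      & exists g : Sig,
          (forall s a, (phi (s, a) == g) = (s \in G)) /\
          (forall u : seq Sig,
             ~ (in_core H (abstract_succ_strip P pi_e H G s0 phi g) u /\
                in_core H (abstract_succ_strip P pi_e1 H G s0 phi g) u))].
Proof.
exists 'I_4, unit, bool, (@PP R),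
  (fun _ _ _ => 0), 3%N, GG, o0, 'I_4, fst, (pol R true), (pol R false).
split.
- split; first split.
    by move=> *; rewrite /PP ler0n.
    by move=> s a1 a2; rewrite /PP sum_ind // tgt_lt.
  have pP b : is_policy (pol R b).
    split; first by move=> *; rewrite /pol ler0n.
    by move=> s; rewrite big_bool /pol; case: b; rewrite /= ?addr0 ?add0r.
  by split; apply: pP.
- by split; [exists (tau0 true) | exists (tau0 false)]; apply: succ_tau0.
- exists [:: o0; o1; o3]; split.
    by apply/(@core_single _ 3 _ _ (abs_char R true) isT).
  by move/(@core_single _ 3 _ _ (abs_char R false) isT) => [].
- exists o3; split.
    by move=> s a; rewrite inE -val_eqE.
  move=> u [/(@core_single _ 3 _ _ (strip_char R true) isT)] -> //.
  by move/(@core_single _ 3 _ _ (strip_char R false) isT) => [].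
Qed.
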